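(* Let $\Gamma$ act essentially by cubical automorphisms on a finite dimensional CAT(0) cube complex $Y$ with no facing triples. Let $\mathfrak h$ be a hyperplane of $Y$ and $\gamma\in\Gamma$ with $\gamma\mathfrak h^+\subsetneq\mathfrak h^+$. Then every hyperplane in the symmetric difference $\mathcal H(\mathfrak h)\,\Delta\,\mathcal H(\gamma\mathfrak h)$ is skewered by $\gamma$. Consequently $|\mathcal H(\mathfrak h)\,\Delta\,\mathcal H(\gamma\mathfrak h)|<\infty$ and the Hausdorff distance (with respect to the piecewise $\ell^1$ metric) between $\mathfrak h$ and $\gamma\mathfrak h$ is finite.
   Context: For a subspace $A\subseteq Y$, $\mathcal H(A)$ is the set of hyperplanes of $Y$ which separate points of $A$. $\mathfrak h^\pm$ denote the two halfspaces bounded by $\mathfrak h$. An element $g$ skewers a hyperplane $\mathfrak k$ if there is $n\ge1$ with $g^n\mathfrak k^+\subsetneq\mathfrak k^+$ or $g^n\mathfrak k^-\subsetneq\mathfrak k^-$. A facing triple is a triple of pairwise disjoint hyperplanes none of which separates the other two. The action is essential if no orbit lies in a bounded neighbourhood of a halfspace. *)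

(* Defs.v *)
(* Combinatorial model of a CAT(0) cube complex via its
   1-skeleton, a median graph (Chepoi / Roller / Gerasimov duality). *)
From Stdlib Require Import Arith List.
Import ListNotations.

Set Implicit Arguments.

Section Graph.
Variable V : Type.
Variable adj : V -> V -> Prop.

Fixpoint walk (n : nat) (x y : V) : Prop :=
  match n with
  | O => x = y
  | S m => exists z, adj x z /\ walk m z y
  end.

Definition dist (x y : V) (n : nat) : Prop :=
  walk n x y /\ forall m, walk m x y -> n <= m.

Definition dist_le (x y : V) (R : nat) : Prop :=
  exists m, m <= R /\ walk m x y.

Definition in_interval (x y m : V) : Prop :=
  exists a b, dist x m a /\ dist m y b /\ dist x y (a + b).

Definition median_graph : Prop :=
  (forall x y, adj x y -> adj y x) /\
  (forall x, ~ adj x x) /\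
  (forall x y, exists n, walk n x y) /\
  (forall x y z, exists m,
      (in_interval x y m /\ in_interval y z m /\ in_interval x z m) /\
      forall m', in_interval x y m' /\ in_interval y z m' /\ in_interval x z m' ->
                 m' = m).

(* the halfspace of the oriented edge (u,v) containing u *)
Definition W (u v : V) (x : V) : Prop :=
  exists n, dist x u n /\ dist x v (S n).

Definition same_set (A B : V -> Prop) : Prop := forall x, A x <-> B x.
Definition subset (A B : V -> Prop) : Prop := forall x, A x -> B x.
Definition strict_subset (A B : V -> Prop) : Prop :=
  subset A B /\ exists x, B x /\ ~ A x.
Definition compl (A : V -> Prop) : V -> Prop := fun x => ~ A x.

(* A hyperplane is represented by one of its halfspaces h^+ (then h^- is the
   complement). *)
Definition halfspace (A : V -> Prop) : Prop :=
  exists u v, adj u v /\ same_set A (W u v).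

Definition same_hyp (A B : V -> Prop) : Prop :=
  same_set A B \/ same_set A (compl B).

Definition cross (A B : V -> Prop) : Prop :=
  (exists x, A x /\ B x) /\ (exists x, A x /\ ~ B x) /\
  (exists x, ~ A x /\ B x) /\ (exists x, ~ A x /\ ~ B x).

Definition carrier (A : V -> Prop) (x : V) : Prop :=
  exists y, adj x y /\ ((A x /\ ~ A y) \/ (~ A x /\ A y)).

Definition lies_in (A K : V -> Prop) : Prop := subset (carrier A) K.

Definition separates (K A B : V -> Prop) : Prop :=
  (lies_in A K /\ lies_in B (compl K)) \/ (lies_in A (compl K) /\ lies_in B K).

Definition disjoint_hyp (A B : V -> Prop) : Prop := ~ cross A B /\ ~ same_hyp A B.

Definition facing_triple (A B C : V -> Prop) : Prop :=
  halfspace A /\ halfspace B /\ halfspace C /\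
  disjoint_hyp A B /\ disjoint_hyp B C /\ disjoint_hyp A C /\
  ~ separates A B C /\ ~ separates B A C /\ ~ separates C A B.

Definition no_facing_triples : Prop := forall A B C, ~ facing_triple A B C.

Definition finite_dimensional : Prop :=
  exists D, forall l : list (V -> Prop),
    (forall A, In A l -> halfspace A) ->
    (forall i j d, i < j < length l -> cross (nth i l d) (nth j l d)) ->
    length l <= D.

Definition img (f : V -> V) (A : V -> Prop) : V -> Prop :=
  fun x => exists y, A y /\ x = f y.

(* the set H(h) of hyperplanes separating points of h (= crossing h) *)
Definition H_of (h k : V -> Prop) : Prop := cross h k.

Definition in_symdiff (h h' k : V -> Prop) : Prop :=
  halfspace k /\ ((H_of h k /\ ~ H_of h' k) \/ (~ H_of h k /\ H_of h' k)).

Definition skewers (f : V -> V) (k : V -> Prop) : Prop :=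
  exists n, 1 <= n /\
    (strict_subset (img (Nat.iter n f) k) k \/
     strict_subset (img (Nat.iter n f) (compl k)) (compl k)).

(* a set of hyperplanes (given as a predicate on representing halfspaces,
   invariant under same_hyp) is finite *)
Definition finitely_many_hyp (P : (V -> Prop) -> Prop) : Prop :=
  exists l : list (V -> Prop), forall k, P k -> exists A, In A l /\ same_hyp A k.

(* finite Hausdorff distance between the (vertex sets of the) carriers *)
Definition finite_hausdorff_carriers (A B : V -> Prop) : Prop :=
  exists R,
    (forall x, carrier A x -> exists y, carrier B y /\ dist_le x y R) /\
    (forall y, carrier B y -> exists x, carrier A x /\ dist_le y x R).

End Graph.

Record group_on (G : Type) := {
  gmul : G -> G -> G; gone : G; ginv : G -> G;
  gmulA : forall a b c, gmul a (gmul b c) = gmul (gmul a b) c;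
  gmul1 : forall a, gmul gone a = a;
  gmulV : forall a, gmul (ginv a) a = gone }.

(* an action of the group by cubical automorphisms (graph automorphisms of
   the 1-skeleton, which extend uniquely to cubical automorphisms) *)
Definition cubical_action (G V : Type) (grp : group_on G) (adj : V -> V -> Prop)
  (act : G -> V -> V) : Prop :=
  (forall x, act (gone grp) x = x) /\
  (forall g h x, act (gmul grp g h) x = act g (act h x)) /\
  (forall g x y, adj x y <-> adj (act g x) (act g y)).

Definition essential (G V : Type) (adj : V -> V -> Prop) (act : G -> V -> V) : Prop :=
  forall (A : V -> Prop) (x : V), halfspace adj A ->
    ~ (exists R, forall g, exists y, A y /\ dist_le adj (act g x) y R).

(* Main.v *)
Require Import Defs.
From Stdlib Require Import Arith List.
From Stdlib Require Import Classical ClassicalEpsilon Lia.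

Section Med.
Variable V : Type.
Variable adj : V -> V -> Prop.
Hypothesis Hsym : forall x y, adj x y -> adj y x.
Hypothesis Hirr : forall x, ~ adj x x.
Hypothesis Hconn : forall x y, exists n, walk adj n x y.
Hypothesis Hmed : forall x y z, exists m,
      (in_interval adj x y m /\ in_interval adj y z m /\ in_interval adj x z m) /\
      forall m', in_interval adj x y m' /\ in_interval adj y z m' /\ in_interval adj x z m' ->
                 m' = m.

Lemma walk_app : forall n m x y z, walk adj n x y -> walk adj m y z -> walk adj (n+m) x z.
Proof.
  induction n; simpl; intros m x y z H1 H2.
  - subst; auto.
  - destruct H1 as [w [Hw H1]]. exists w; split; eauto.
Qed.

Lemma walk_sym : forall n x y, walk adj n x y -> walk adj n y x.
Proof.
  induction n; intros x y H.
  - simpl in *; auto.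
  - destruct H as [w [Hw H]].
    replace (S n) with (n + 1) by lia.
    apply walk_app with w; auto. simpl. exists x; split; auto.
Qed.

Lemma least (P : nat -> Prop) : forall n, P n -> exists m, P m /\ forall k, P k -> m <= k.
Proof.
  intro n; induction n as [n IH] using (well_founded_induction lt_wf); intros Pn.
  destruct (classic (exists k, k < n /\ P k)) as [[k [Hk Pk]]|Hn].
  - exact (IH k Hk Pk).
  - exists n; split; auto; intros k Pk.
    destruct (le_lt_dec n k); auto. exfalso; apply Hn; eauto.
Qed.

Lemma dist_ex : forall x y, exists n, dist adj x y n.
Proof.
  intros x y. destruct (Hconn x y) as [n Hn].
  destruct (least (fun n => walk adj n x y) n Hn) as [m [Hm Hl]].
  exists m; split; auto.
Qed.

Definition d x y : nat := proj1_sig (constructive_indefinite_description _ (dist_ex x y)).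

Lemma d_spec : forall x y, dist adj x y (d x y).
Proof. intros; unfold d; destruct constructive_indefinite_description; auto. Qed.

Lemma d_walk : forall x y, walk adj (d x y) x y.
Proof. intros; apply d_spec. Qed.

Lemma d_le : forall n x y, walk adj n x y -> d x y <= n.
Proof. intros; apply d_spec; auto. Qed.

Lemma d_unique : forall x y n, dist adj x y n -> d x y = n.
Proof.
  intros x y n [H1 H2]. pose proof (d_spec x y) as [H3 H4].
  specialize (H2 _ H3). specialize (H4 _ H1). lia.
Qed.

Lemma d_refl : forall x, d x x = 0.
Proof. intros. assert (H := d_le 0 x x eq_refl). lia. Qed.

Lemma d_eq0 : forall x y, d x y = 0 -> x = y.
Proof. intros x y H. pose proof (d_walk x y) as W. rewrite H in W. exact W. Qed.

Lemma d_sym : forall x y, d x y = d y x.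
Proof.
  intros. pose proof (d_le _ _ _ (walk_sym _ _ _ (d_walk x y))).
  pose proof (d_le _ _ _ (walk_sym _ _ _ (d_walk y x))). lia.
Qed.

Lemma d_tri : forall x y z, d x z <= d x y + d y z.
Proof. intros. apply d_le. apply walk_app with y; apply d_walk. Qed.

Lemma walk1 : forall x y, adj x y -> walk adj 1 x y.
Proof. intros; simpl; exists y; auto. Qed.

Lemma d_adj : forall x y, adj x y -> d x y = 1.
Proof.
  intros x y H. pose proof (d_le _ _ _ (walk1 _ _ H)).
  destruct (d x y) eqn:E; [|lia]. apply d_eq0 in E; subst. exfalso; eapply Hirr; eauto.
Qed.

Lemma d1_adj : forall x y, d x y = 1 -> adj x y.
Proof.
  intros x y H. pose proof (d_walk x y) as W. rewrite H in W. simpl in W.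
  destruct W as [z [Hz W]]; subst; auto.
Qed.

Lemma d_step : forall x y n, d x y = S n -> exists z, adj x z /\ d z y = n.
Proof.
  intros x y n H. pose proof (d_walk x y) as W. rewrite H in W. simpl in W.
  destruct W as [z [Hz W]]. exists z; split; auto.
  pose proof (d_le _ _ _ W). pose proof (d_tri x z y). rewrite (d_adj _ _ Hz) in H1. lia.
Qed.

Lemma d_adj_le : forall x a b, adj a b -> d x a <= S (d x b).
Proof. intros. pose proof (d_tri x b a). rewrite (d_adj b a) in H0; auto. lia. Qed.

Lemma interval_iff : forall x y m, in_interval adj x y m <-> d x m + d m y = d x y.
Proof.
  intros; split.
  - intros [a [b [H1 [H2 H3]]]]. apply d_unique in H1, H2, H3. lia.
  - intros H. exists (d x m), (d m y). split; [apply d_spec|split;[apply d_spec|]].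
    rewrite H; apply d_spec.
Qed.

Lemma med : forall x y z, exists m,
   (d x m + d m y = d x y /\ d y m + d m z = d y z /\ d x m + d m z = d x z) /\
   forall m', d x m' + d m' y = d x y -> d y m' + d m' z = d y z -> d x m' + d m' z = d x z -> m' = m.
Proof.
  intros x y z. destruct (Hmed x y z) as [m [[H1 [H2 H3]] H4]].
  exists m. rewrite !interval_iff in H1, H2, H3. split; [auto|].
  intros m' A B C. apply H4. rewrite !interval_iff; auto.
Qed.

Lemma bip : forall x a b, adj a b -> d x a <> d x b.
Proof.
  intros x a b Hab E.
  destruct (med x a b) as [m [[H1 [H2 H3]] _]].
  rewrite (d_adj _ _ Hab) in H2.
  destruct (d a m) eqn:Ea.
  - apply d_eq0 in Ea; subst m. pose proof (d_adj _ _ Hab). lia.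
  - assert (d m b = 0) by lia. apply d_eq0 in H; subst m. pose proof (d_adj _ _ (Hsym _ _ Hab)). lia.
Qed.

Lemma W_iff : forall u v x, W adj u v x <-> d x v = S (d x u).
Proof.
  intros; split.
  - intros [n [H1 H2]]. apply d_unique in H1, H2. lia.
  - intros H. exists (d x u); split; [apply d_spec|]. rewrite <- H; apply d_spec.
Qed.

Lemma W_dich : forall u v x, adj u v -> W adj u v x \/ W adj v u x.
Proof.
  intros u v x H. rewrite !W_iff. pose proof (bip x u v H).
  pose proof (d_adj_le x u v H). pose proof (d_adj_le x v u (Hsym _ _ H)). lia.
Qed.

Lemma W_excl : forall u v x, W adj u v x -> W adj v u x -> False.
Proof. intros u v x. rewrite !W_iff. lia. Qed.


Lemma d_adj_le1 : forall a b y, adj a b -> d a y <= S (d b y).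
Proof. intros. rewrite (d_sym a y), (d_sym b y). apply d_adj_le; auto. Qed.

Lemma cn_d2 : forall a x y, adj a x -> adj a y -> x <> y -> d x y = 2.
Proof.
  intros a x y Hx Hy Hne.
  pose proof (d_tri x a y). rewrite (d_adj _ _ Hy), (d_adj _ _ (Hsym _ _ Hx)) in H.
  destruct (d x y) as [|[|[|k]]] eqn:E; try lia.
  - apply d_eq0 in E; contradiction.
  - apply d1_adj in E. exfalso. apply (bip a x y E). rewrite !d_adj; auto.
Qed.

Lemma K23 : forall a b x y z, a <> b -> adj a x -> adj a y -> adj a z ->
  adj b x -> adj b y -> adj b z -> x <> y -> y <> z -> x <> z -> False.
Proof.
  intros a b x y z Hab ax ay az bx b_y bz xy yz xz.
  destruct (med x y z) as [m [_ Hu]].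
  assert (Hxy := cn_d2 a x y ax ay xy).
  assert (Hyz := cn_d2 a y z ay az yz).
  assert (Hxz := cn_d2 a x z ax az xz).
  assert (a = m).
  { apply Hu; rewrite ?Hxy, ?Hyz, ?Hxz;
    rewrite ?(d_adj a x), ?(d_adj a y), ?(d_adj a z), ?(d_adj x a), ?(d_adj y a), ?(d_adj z a); auto. }
  assert (b = m).
  { apply Hu; rewrite ?Hxy, ?Hyz, ?Hxz;
    rewrite ?(d_adj b x), ?(d_adj b y), ?(d_adj b z), ?(d_adj x b), ?(d_adj y b), ?(d_adj z b); auto. }
  congruence.
Qed.

Lemma QC : forall x u w v k, adj u v -> adj w v -> u <> w -> d x u = k -> d x w = k ->
  d x v = S k -> exists z, adj u z /\ adj w z /\ S (d x z) = k.
Proof.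
  intros x u w v k uv wv uw Hu Hw Hv.
  destruct (med x u w) as [m [[H1 [H2 H3]] _]].
  rewrite (cn_d2 v u w (Hsym _ _ uv) (Hsym _ _ wv) uw) in H2.
  rewrite (d_sym m u) in H1.
  assert (d u m = 1) by lia. assert (d m w = 1) by lia.
  exists m; split; [apply d1_adj; auto|split; [apply d1_adj; rewrite d_sym; auto| lia]].
Qed.

Section Hyp.
Variables u v : V.
Hypothesis Huv : adj u v.

Lemma Sx : forall p x x' y, d x u = p -> W adj u v x -> W adj v u x' -> adj x x' ->
  W adj u v y -> S (d x' y) = d x y -> False.
Proof.
  induction p as [|p IH]; intros x x' y Hp Wx Wx' Hxx' Wy Hy; rewrite W_iff in *.
  - apply d_eq0 in Hp; subst x.
    assert (d x' u = 1) by (apply d_adj; auto). 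
    assert (d x' v = 0) by lia. apply d_eq0 in H0; subst x'.
    rewrite (d_sym y u), (d_sym y v) in Wy. lia.
  - pose proof (d_adj_le1 x' x v (Hsym _ _ Hxx')) as G1.
    pose proof (d_adj_le1 x x' v Hxx') as G2.
    pose proof (d_adj_le1 x' x u (Hsym _ _ Hxx')) as G3.
    assert (Ex'v : d x' v = S p) by lia.
    destruct (med x y u) as [m [[H1 [H2 H3]] _]].
    destruct (d x m) as [|n] eqn:Em.
    + apply d_eq0 in Em; subst m.
      pose proof (d_tri y x' v) as G4. rewrite (d_sym y x') in G4.
      rewrite (d_sym y x) in H2. lia.
    + destruct (d_step x m n Em) as [x'' [Hx'' Hm]].
      pose proof (d_tri x'' m u) as G5. pose proof (d_adj_le1 x x'' u Hx'') as G6.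
      assert (Ex''u : d x'' u = p) by lia.
      pose proof (d_tri x'' m y) as G7. pose proof (d_adj_le1 x x'' y Hx'') as G8.
      assert (Ex''y : S (d x'' y) = d x y) by lia.
      pose proof (d_adj_le1 x x'' v Hx'') as G9.
      pose proof (d_adj_le1 x'' x v (Hsym _ _ Hx'')) as G10.
      assert (Ex''v : d x'' v = S p).
      { destruct (W_dich u v x'' Huv) as [Hw|Hw]; rewrite W_iff in Hw; lia. }
      assert (Hne : x' <> x'') by (intro; subst; lia).
      destruct (QC v x' x'' x (S p) (Hsym _ _ Hxx') (Hsym _ _ Hx'') Hne)
        as [z [z1 [z2 z3]]]; try (rewrite d_sym; lia).
      pose proof (d_adj_le1 x' z u z1) as G11. pose proof (d_adj_le1 z x'' u (Hsym _ _ z2)) as G12.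
      assert (Ezu : d z u = S p) by (rewrite d_sym in z3; lia).
      destruct (QC y x' x'' x (d x' y) (Hsym _ _ Hxx') (Hsym _ _ Hx'') Hne)
        as [z' [z1' [z2' z3']]]; try (rewrite ?(d_sym y x'), ?(d_sym y x''), ?(d_sym y x); lia).
      assert (z = z').
      { assert (Hxz : x <> z) by (intro E; rewrite <- E in z3; rewrite d_sym in z3; lia).
        assert (Hxz' : x <> z') by (intro E; rewrite <- E in z3'; rewrite (d_sym y x) in z3'; lia).
        apply NNPP; intro Hzz.
        exact (K23 x' x'' x z z' Hne (Hsym _ _ Hxx') z1 z1' (Hsym _ _ Hx'') z2 z2' Hxz Hzz Hxz'). }
      subst z'.
      apply (IH x'' z y); auto; rewrite ?W_iff; try lia.
      all: rewrite ?(d_sym z v), ?(d_sym z y); lia.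
Qed.

Lemma conv : forall n x y m, d x m = n -> W adj u v x -> W adj u v y ->
  d x m + d m y = d x y -> W adj u v m.
Proof.
  induction n as [|n IH]; intros x y m Hn Wx Wy Hm.
  - apply d_eq0 in Hn; subst; auto.
  - destruct (d_step x m n Hn) as [x'' [H1 H2]].
    pose proof (d_tri x'' m y). pose proof (d_adj_le1 x x'' y H1).
    assert (S (d x'' y) = d x y) by lia.
    destruct (W_dich u v x'' Huv) as [Hw|Hw].
    + apply (IH x'' y m); auto. lia.
    + exfalso. apply (Sx (d x u) x x'' y); auto.
Qed.

End Hyp.

Lemma convex : forall u v x y m, adj u v -> W adj u v x -> W adj u v y ->
  d x m + d m y = d x y -> W adj u v m.
Proof. intros. apply (conv u v H (d x m) x y m); auto. Qed.

Lemma KL : forall u v a b, adj u v -> adj a b -> W adj u v a -> W adj v u b ->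
  forall x, W adj u v x <-> W adj a b x.
Proof.
  intros u v a b Huv Hab Wa Wb x; split; intro Hx.
  - destruct (W_dich a b x Hab) as [H|H]; auto. exfalso.
    rewrite W_iff in H.
    apply (W_excl u v b); auto. apply (convex u v x a b); auto.
    rewrite (d_adj b a); auto. lia.
  - destruct (W_dich u v x Huv) as [H|H]; auto. exfalso.
    rewrite W_iff in Hx.
    apply (W_excl u v a); auto. apply (convex v u x b a); auto.
    rewrite (d_adj a b); auto. lia.
Qed.

Implicit Types (A B K k : V -> Prop) (F Fi : V -> V).
Lemma W_self : forall u v, adj u v -> W adj u v u.
Proof. intros. rewrite W_iff, d_refl, d_adj; auto. Qed.

Lemma W_not : forall u v, adj u v -> ~ W adj u v v.
Proof. intros u v H Hw. rewrite W_iff, d_refl in Hw. discriminate. Qed.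

Lemma compl_half : forall A, halfspace adj A -> halfspace adj (compl A).
Proof.
  intros A [u [v [Huv HA]]]. exists v, u; split; auto.
  intro x; unfold compl; rewrite (HA x). split; intro H.
  - destruct (W_dich u v x Huv); tauto.
  - intro H'; exact (W_excl u v x H' H).
Qed.

Lemma half_ne : forall A, halfspace adj A -> exists x, A x.
Proof. intros A [u [v [Huv HA]]]. exists u. apply HA, W_self; auto. Qed.

Lemma half_co : forall A, halfspace adj A -> exists x, ~ A x.
Proof. intros A [u [v [Huv HA]]]. exists v. rewrite (HA v). apply W_not; auto. Qed.

Lemma half_carrier : forall A, halfspace adj A -> exists x, A x /\ carrier adj A x.
Proof.
  intros A [u [v [Huv HA]]]. exists u.
  assert (A u) by (apply HA, W_self; auto).
  assert (~ A v) by (rewrite (HA v); apply W_not; auto).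
  split; auto. exists v; split; auto.
Qed.

Lemma KL' : forall A a b, halfspace adj A -> adj a b -> A a -> ~ A b -> same_set A (W adj a b).
Proof.
  intros A a b [u [v [Huv HA]]] Hab Ha Hb x. rewrite (HA x).
  apply KL; auto. apply HA; auto.
  destruct (W_dich u v b Huv); auto. exfalso; apply Hb, HA; auto.
Qed.

Lemma half_convex : forall A x y m, halfspace adj A -> A x -> A y ->
  d x m + d m y = d x y -> A m.
Proof.
  intros A x y m [u [v [Huv HA]]] Hx Hy Hm. apply HA.
  apply (convex u v x y m); auto; apply HA; auto.
Qed.

Lemma half_ext : forall A B, halfspace adj A -> same_set A B -> halfspace adj B.
Proof.
  intros A B [u [v [Huv HA]]] E. exists u, v; split; auto. intro x. rewrite <- (E x). apply HA.
Qed.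

Definition autom (F Fi : V -> V) : Prop :=
  (forall x, F (Fi x) = x) /\ (forall x, Fi (F x) = x) /\ (forall x y, adj x y <-> adj (F x) (F y)).

Lemma autom_sym : forall F Fi, autom F Fi -> autom Fi F.
Proof.
  intros F Fi [H1 [H2 H3]]. split; auto. split; auto. intros x y.
  rewrite (H3 (Fi x) (Fi y)), !H1. tauto.
Qed.

Lemma autom_iter : forall F Fi n, autom F Fi -> autom (Nat.iter n F) (Nat.iter n Fi).
Proof.
  intros F Fi n [H1 [H2 H3]]. induction n as [|n [I1 [I2 I3]]].
  - split; [|split]; simpl; auto. tauto.
  - split; [|split].
    + intro x. rewrite Nat.iter_succ_r. simpl. rewrite H1. apply I1.
    + intro x. rewrite Nat.iter_succ_r. simpl. rewrite H2. apply I2.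
    + intros x y. simpl. rewrite I3. apply H3.
Qed.

Lemma walk_F : forall F Fi n x y, autom F Fi -> walk adj n x y -> walk adj n (F x) (F y).
Proof.
  intros F Fi n x y [H1 [H2 H3]]. revert x. induction n; intros x H.
  - simpl in *; subst; auto.
  - destruct H as [z [Hz H]]. exists (F z); split; [apply (proj1 (H3 x z)); auto| apply IHn; auto].
Qed.

Lemma d_F : forall F Fi x y, autom F Fi -> d (F x) (F y) = d x y.
Proof.
  intros F Fi x y HF.
  pose proof (d_le _ _ _ (walk_F _ _ _ _ _ HF (d_walk x y))).
  pose proof (d_le _ _ _ (walk_F _ _ _ _ _ (autom_sym _ _ HF) (d_walk (F x) (F y)))).
  destruct HF as [_ [H2 _]]. rewrite !H2 in H0. lia.
Qed.

Lemma img_iff : forall F Fi A x, autom F Fi -> (img F A x <-> A (Fi x)).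
Proof.
  intros F Fi A x [H1 [H2 H3]]. split.
  - intros [y [Hy ->]]. rewrite H2; auto.
  - intro H. exists (Fi x); split; auto.
Qed.

Lemma W_F : forall F Fi u v x, autom F Fi -> (W adj (F u) (F v) (F x) <-> W adj u v x).
Proof. intros. rewrite !W_iff, !(d_F F Fi); auto. tauto. Qed.

Lemma half_img : forall F Fi A, autom F Fi -> halfspace adj A -> halfspace adj (img F A).
Proof.
  intros F Fi A HF [u [v [Huv HA]]]. exists (F u), (F v). split.
  - destruct HF as [_ [_ H3]]. apply (proj1 (H3 u v)); auto.
  - intro x. rewrite (img_iff F Fi); auto. rewrite (HA (Fi x)).
    rewrite <- (W_F F Fi u v (Fi x) HF).
    destruct HF as [H1 _]. rewrite H1. tauto.
Qed.

Lemma cross_ext : forall A A' B B' : V -> Prop, same_set A A' -> same_set B B' -> cross A B -> cross A' B'.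
Proof.
  intros A A' B B' EA EB [[x1 H1] [[x2 H2] [[x3 H3] [x4 H4]]]].
  unfold same_set in *.
  split; [exists x1|split; [exists x2|split; [exists x3|exists x4]]];
  rewrite <- ?EA, <- ?EB; auto.
Qed.

Lemma img_same : forall F Fi A, autom F Fi -> same_set (img F A) (fun x => A (Fi x)).
Proof. intros F Fi A HF x. apply (img_iff F Fi); auto. Qed.

Lemma cross_pre : forall F Fi A B, autom F Fi ->
  (cross (fun x => A (Fi x)) (fun x => B (Fi x)) <-> cross A B).
Proof.
  intros F Fi A B [H1 [H2 H3]]. unfold cross.
  split; intros [[x1 K1] [[x2 K2] [[x3 K3] [x4 K4]]]].
  - split; [exists (Fi x1)|split; [exists (Fi x2)|split; [exists (Fi x3)|exists (Fi x4)]]]; auto.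
  - split; [exists (F x1)|split; [exists (F x2)|split; [exists (F x3)|exists (F x4)]]]; rewrite H2; auto.
Qed.

Lemma same_sym : forall A B, same_set A B -> same_set B A.
Proof. intros A B H x. rewrite (H x). tauto. Qed.

Lemma same_refl : forall A, same_set A A.
Proof. intros A x. tauto. Qed.

Lemma cross_img : forall F Fi A B, autom F Fi -> (cross (img F A) (img F B) <-> cross A B).
Proof.
  intros F Fi A B HF. rewrite <- (cross_pre F Fi A B HF). split; apply cross_ext;
  try apply img_same; auto; apply same_sym; eapply img_same; eauto.
Qed.

Lemma cross_sym : forall A B, cross A B -> cross B A.
Proof.
  intros A B [[x1 H1] [[x2 H2] [[x3 H3] [x4 H4]]]].
  split; [exists x1|split; [exists x3|split; [exists x2|exists x4]]]; tauto.
Qed.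

Lemma cross_compl : forall A B, cross A (compl B) <-> cross A B.
Proof.
  intros A B. unfold cross, compl. split;
  intros [[x1 H1] [[x2 H2] [[x3 H3] [x4 H4]]]];
  (split; [exists x2|split; [exists x1|split; [exists x4|exists x3]]]);
  intuition; apply NNPP; auto.
Qed.

Lemma carrier_img : forall F Fi A x, autom F Fi -> (carrier adj (img F A) x <-> carrier adj A (Fi x)).
Proof.
  intros F Fi A x HF. unfold carrier.
  assert (E := img_iff F Fi A). 
  pose proof HF as [H1 [H2 H3]]. split.
  - intros [y [Hy K]]. rewrite !E in K by auto.
    exists (Fi y). split; auto. apply H3. rewrite !H1; auto.
  - intros [y [Hy K]]. exists (F y). rewrite !E by auto. rewrite H2. split; auto.
    rewrite <- (H1 x) at 1. apply (proj1 (H3 _ _)); auto.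
Qed.

Lemma carrier_compl : forall A x, carrier adj (compl A) x <-> carrier adj A x.
Proof.
  intros A x. unfold carrier, compl. split; intros [y [Hy K]]; exists y; split; auto; tauto.
Qed.

Lemma img_comp : forall F m n A x,
  img (Nat.iter (m + n) F) A x <-> img (Nat.iter m F) (img (Nat.iter n F) A) x.
Proof.
  intros. unfold img. split.
  - intros [y [Hy ->]]. exists (Nat.iter n F y). split; eauto. apply Nat.iter_add.
  - intros [y [[z [Hz ->]] ->]]. exists z; split; auto. symmetry; apply Nat.iter_add.
Qed.

Lemma same_hyp_trans : forall A k W0 : V -> Prop, same_hyp A k -> same_hyp A W0 -> same_hyp k W0.
Proof.
  unfold same_hyp, same_set, compl. intros A k W0 [H1|H1] [H2|H2]; [left|right|right|left];
  intro x; specialize (H1 x); specialize (H2 x); split; intros; try tauto;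
  apply NNPP; tauto.
Qed.

Lemma same_hyp_compl : forall A k, same_hyp A (compl k) -> same_hyp A k.
Proof.
  unfold same_hyp, same_set, compl. intros A k [H|H]; [right|left]; intro x; specialize (H x);
  split; intros; try tauto; apply NNPP; tauto.
Qed.

Definition cov (l : list (V -> Prop)) (P : (V -> Prop) -> Prop) : Prop :=
  forall k, P k -> exists A, In A l /\ same_hyp A k.

Lemma cov_mono : forall l (P Q : (V -> Prop) -> Prop), cov l P -> (forall k, Q k -> P k) -> cov l Q.
Proof. intros l P Q H1 H2 k Hk. apply H1, H2; auto. Qed.

Lemma cov_app : forall l1 l2 (P Q : (V -> Prop) -> Prop), cov l1 P -> cov l2 Q ->
  cov (l1 ++ l2) (fun k => P k \/ Q k).
Proof.
  intros l1 l2 P Q H1 H2 k [Hk|Hk].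
  - destruct (H1 k Hk) as [A [HA E]]. exists A; split; auto. apply in_or_app; auto.
  - destruct (H2 k Hk) as [A [HA E]]. exists A; split; auto. apply in_or_app; auto.
Qed.

Lemma cov_bunion : forall (P : nat -> (V -> Prop) -> Prop) j,
  (forall m, m <= j -> exists l, cov l (P m)) ->
  exists l, cov l (fun k => exists m, m <= j /\ P m k).
Proof.
  intros P j. induction j as [|j IH]; intros H.
  - destruct (H 0 (le_n 0)) as [l Hl]. exists l. intros k [m [Hm Hk]].
    assert (m = 0) by lia. subst. apply Hl; auto.
  - destruct IH as [l1 H1]. { intros m Hm. apply H. lia. }
    destruct (H (S j) (le_n _)) as [l2 H2].
    exists (l1 ++ l2). eapply cov_mono. apply (cov_app _ _ _ _ H1 H2).
    intros k [m [Hm Hk]]. destruct (Nat.eq_dec m (S j)).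
    + subst; right; auto.
    + left. exists m; split; auto; lia.
Qed.

Lemma Sep_cov : forall n p q, d q p = n ->
  exists l, cov l (fun k => halfspace adj k /\ k p /\ ~ k q).
Proof.
  induction n as [|n IH]; intros p q Hn.
  - apply d_eq0 in Hn; subst. exists nil. intros k [_ [H1 H2]]. contradiction.
  - destruct (d_step q p n Hn) as [q' [Hq Hq']].
    destruct (IH p q' Hq') as [l Hl].
    exists (W adj q' q :: l). intros k [Hk [Hp Hnq]].
    destruct (classic (k q')) as [Kq|Kq].
    + exists (W adj q' q); split; [left; auto|]. left. apply same_sym.
      apply KL'; auto.
    + destruct (Hl k) as [A [HA E]]; auto. exists A; split; auto. right; auto.
Qed.

Lemma remove : forall l (P : (V -> Prop) -> Prop) W0, cov l P ->
  (exists A, In A l /\ same_hyp A W0) ->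
  exists l', length l' < length l /\ cov l' (fun k => P k /\ ~ same_hyp k W0).
Proof.
  induction l as [|B l IH]; intros P W0 Hc [A [HA E]].
  - destruct HA.
  - destruct (classic (same_hyp B W0)) as [HB|HB].
    + exists l. split; [simpl; lia|]. intros k [Pk Nk].
      destruct (Hc k Pk) as [A' [[<-|HA'] E']].
      * exfalso; apply Nk. eapply same_hyp_trans; eauto.
      * exists A'; split; auto.
    + destruct HA as [<-|HA]; [contradiction|].
      destruct (IH (fun k => P k /\ ~ same_hyp B k) W0) as [l'' [Hlen Hc'']].
      { intros k [Pk Nk]. destruct (Hc k Pk) as [A' [[<-|HA'] E']]; [contradiction|].
        exists A'; split; auto. }
      { exists A; split; auto. }
      exists (B :: l''). split; [simpl; lia|].
      intros k [Pk Nk]. destruct (classic (same_hyp B k)) as [Bk|Bk].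
      * exists B; split; [left|]; auto.
      * destruct (Hc'' k) as [A' [HA' E']]; [tauto|]. exists A'; split; [right|]; auto.
Qed.

Lemma NP : forall K, halfspace adj K -> forall n x z l, d x z = n -> K z ->
  (forall w, K w -> d x z <= d x w) ->
  cov l (fun k => halfspace adj k /\ subset K k /\ ~ k x) -> n <= length l.
Proof.
  intros K HK n. induction n as [|n IH]; intros x z l Hn Kz Hnear Hc; [lia|].
  destruct (d_step x z n Hn) as [x1 [Hx1 Hd1]].
  set (W0 := W adj x1 x).
  assert (HW0 : halfspace adj W0) by (exists x1, x; split; [auto|apply same_refl]).
  assert (W0x1 : W0 x1) by (apply W_self; auto).
  assert (W0x : ~ W0 x) by (apply W_not; auto).
  assert (W0z : W0 z) by (unfold W0; rewrite W_iff, (d_sym z x1), (d_sym z x); lia).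
  assert (KW0 : subset K W0).
  { intros w Kw. destruct (W_dich x1 x w (Hsym _ _ Hx1)) as [Hw|Hw]; auto. exfalso.
    destruct (med x z w) as [m [[H1 [H2 H3]] _]].
    assert (Km : K m) by (apply (half_convex K z w m); auto).
    specialize (Hnear m Km).
    assert (d m z = 0) by lia. apply d_eq0 in H. subst m.
    apply (W_excl x x1 z).
    - apply (convex x x1 x w z); auto. apply W_self; auto.
    - exact W0z. }
  destruct (remove l _ W0 Hc) as [l' [Hlen Hc']].
  { destruct (Hc W0) as [A [HA E]]. repeat split; auto. exists A; auto. }
  assert (n <= length l'); [|lia].
  apply (IH x1 z l'); auto.
  - intros w Kw. specialize (Hnear w Kw). pose proof (d_tri x x1 w).
    rewrite (d_adj x x1 Hx1) in H. lia.
  - eapply cov_mono; eauto. intros k [Hk [Sk Nk]].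
    assert (Kx : ~ k x).
    { intro kx. assert (E := KL' k x x1 Hk Hx1 kx Nk).
      apply (W_excl x x1 z). apply E; auto. apply W0z. }
    repeat split; auto. intros [E|E].
    + apply Nk. apply E; auto.
    + apply (E z); auto.
Qed.

Lemma disj_hyp : forall A B, halfspace adj A -> halfspace adj B ->
  (forall x, ~ (A x /\ B x)) -> (exists x, ~ A x /\ ~ B x) -> disjoint_hyp A B.
Proof.
  intros A B HA HB D1 [x0 [N1 N2]]. split.
  - intros [[x Hx] _]. apply (D1 x); auto.
  - intros [E|E].
    + destruct (half_ne A HA) as [x Hx]. apply (D1 x). split; auto. apply E; auto.
    + apply N1. apply E. exact N2.
Qed.

Lemma nsep : forall A B C, halfspace adj B -> halfspace adj C ->
  (forall x, ~ (A x /\ B x)) -> (forall x, ~ (A x /\ C x)) -> ~ separates adj A B C.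
Proof.
  intros A B C HB HC D1 D2 [[L1 L2]|[L1 L2]].
  - destruct (half_carrier B HB) as [x [Bx Cx]]. apply (D1 x); split; [apply L1|]; auto.
  - destruct (half_carrier C HC) as [x [Bx Cx]]. apply (D2 x); split; [apply L2|]; auto.
Qed.

Lemma FT : forall A B C, halfspace adj A -> halfspace adj B -> halfspace adj C ->
  (forall x, ~ (A x /\ B x)) -> (forall x, ~ (B x /\ C x)) -> (forall x, ~ (A x /\ C x)) ->
  (exists x, ~ A x /\ ~ B x) -> (exists x, ~ B x /\ ~ C x) -> (exists x, ~ A x /\ ~ C x) ->
  facing_triple adj A B C.
Proof.
  intros A B C HA HB HC D1 D2 D3 N1 N2 N3.
  unfold facing_triple.
  refine (conj HA (conj HB (conj HC (conj _ (conj _ (conj _ (conj _ (conj _ _)))))))).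
  - apply disj_hyp; auto.
  - apply disj_hyp; auto.
  - apply disj_hyp; auto.
  - apply nsep; auto.
  - apply nsep; auto; intros x [H1 H2]; apply (D1 x); tauto.
  - apply nsep; auto; intros x [H1 H2]; [apply (D3 x)|apply (D2 x)]; tauto.
Qed.

Lemma enter : forall K n x z, walk adj n x z -> ~ K x -> K z ->
  exists y, carrier adj K y /\ exists m, m <= n /\ walk adj m x y.
Proof.
  intros K n. induction n as [|n IH]; intros x z Hw Kx Kz.
  - simpl in Hw; subst; contradiction.
  - destruct Hw as [w [Hxw Hw]]. destruct (classic (K w)) as [Kw|Kw].
    + exists w. split.
      * exists x. split; auto.
      * exists 1. split; [lia|]. apply walk1; auto.
    + destruct (IH w z Hw Kw Kz) as [y [Cy [m [Hm Hwy]]]].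
      exists y; split; auto. exists (S m); split; [lia|]. exists w; auto.
Qed.

Lemma strict_ext : forall A A' B B', same_set A A' -> same_set B B' ->
  strict_subset A B -> strict_subset A' B'.
Proof.
  intros A A' B B' EA EB [S [x [Bx Ax]]]. split.
  - intros y Hy. apply EB, S, EA; auto.
  - exists x. split; [apply EB; auto| rewrite <- (EA x); auto].
Qed.

Lemma skew_compl : forall F Fi k, autom F Fi -> skewers F (compl k) -> skewers F k.
Proof.
  intros F Fi k HF [n [Hn [S|S]]]; exists n; split; auto.
  left. revert S. apply strict_ext.
  + intro x. rewrite !(img_iff (Nat.iter n F) (Nat.iter n Fi)) by (apply autom_iter; auto).
    unfold compl. split; [apply NNPP|tauto].
  + intro x. unfold compl. split; [apply NNPP|tauto].
Qed.

Section Act.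
Variables F Fi : V -> V.
Hypothesis HF : autom F Fi.
Variable hh : V -> Prop.
Hypothesis HH : halfspace adj hh.
Hypothesis HFH : strict_subset (img F hh) hh.
Variable D : nat.
Hypothesis HD : forall l : list (V -> Prop), (forall A, In A l -> halfspace adj A) ->
    (forall i j dd, i < j < length l -> cross (nth i l dd) (nth j l dd)) -> length l <= D.
Hypothesis Hnft : forall A B C, ~ facing_triple adj A B C.

Lemma HFn : forall n, autom (Nat.iter n F) (Nat.iter n Fi).
Proof. intros; apply autom_iter; auto. Qed.

Lemma imgn : forall n A x, img (Nat.iter n F) A x <-> A (Nat.iter n Fi x).
Proof. intros. apply img_iff. apply HFn. Qed.

Lemma invn1 : forall n x, Nat.iter n Fi (Nat.iter n F x) = x.
Proof. intros. apply (HFn n). Qed.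

Lemma invn2 : forall n x, Nat.iter n F (Nat.iter n Fi x) = x.
Proof. intros. apply (HFn n). Qed.

Lemma dim_fam : forall b : nat -> (V -> Prop), (forall i, i <= D -> halfspace adj (b i)) ->
  (forall i j, i < j -> j <= D -> cross (b i) (b j)) -> False.
Proof.
  intros b Hb Hc. set (l := map b (seq 0 (S D))).
  assert (Hl : length l <= D); [|unfold l in Hl; rewrite length_map, length_seq in Hl; lia].
  apply HD.
  - intros A HA. unfold l in HA. apply in_map_iff in HA. destruct HA as [i [<- Hi]].
    apply in_seq in Hi. apply Hb. lia.
  - intros i j dd Hij. unfold l in *. rewrite length_map, length_seq in Hij.
    rewrite (nth_indep _ (n:=i) dd (b 0)), (nth_indep _ (n:=j) dd (b 0)) by (rewrite length_map, length_seq; lia).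
    rewrite !map_nth, !seq_nth by lia. simpl. apply Hc; lia.
Qed.

Lemma FHsub : subset (img F hh) hh.
Proof. apply HFH. Qed.

Lemma ch1 : forall j y, hh y -> hh (Nat.iter j F y).
Proof.
  induction j; intros y Hy; simpl; auto. apply FHsub. exists (Nat.iter j F y); auto.
Qed.

Lemma ch2 : forall j y, hh y -> img F hh (Nat.iter (S j) F y).
Proof. intros. simpl. exists (Nat.iter j F y); split; auto. apply ch1; auto. Qed.

Lemma ch3 : forall t y, hh y -> img F hh (Nat.iter t F (F y)).
Proof. intros. rewrite <- Nat.iter_succ_r. apply ch2; auto. Qed.

Lemma inj : forall n x y, Nat.iter n F x = Nat.iter n F y -> x = y.
Proof. intros n x y E. rewrite <- (invn1 n x), <- (invn1 n y), E; auto. Qed.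

Definition Oset k := halfspace adj k /\ subset (img F hh) k /\ cross hh k.

Lemma NC : forall k k' t, Oset k -> Oset k' -> exists x, ~ k x /\ ~ img (Nat.iter t F) k' x.
Proof.
  intros k k' t [Hk [Sk Ck]] [Hk' [Sk' Ck']].
  destruct (half_ne hh HH) as [u Hu].
  apply NNPP; intro N.
  apply (Hnft (compl k) (compl (img (Nat.iter t F) k')) (img (Nat.iter t F) (img F hh))).
  apply FT.
  - apply compl_half; auto.
  - apply compl_half. apply (half_img _ _ _ (HFn t)); auto.
  - apply (half_img _ _ _ (HFn t)). apply (half_img _ _ _ HF); auto.
  - intros x [A1 B1]. apply N; exists x; split; auto.
  - intros x [B1 C1]. apply B1. destruct C1 as [y [Hy ->]]. exists y; split; auto.
  - intros x [A1 C1]. apply A1. destruct C1 as [y [[y0 [Hy0 ->]] ->]]. apply Sk; apply ch3; auto.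
  - exists (Nat.iter t F (F u)). unfold compl; split; intro Hc; apply Hc.
    + apply Sk; apply ch3; auto.
    + exists (F u); split; auto. apply Sk'. exists u; auto.
  - destruct Ck' as [_ [_ [[y [Hy1 Hy2]] _]]].
    exists (Nat.iter t F y). unfold compl; split.
    + intro Hc; apply Hc. exists y; auto.
    + intros [y' [Hy' E]]. apply inj in E. subst y'. apply Hy1, FHsub; auto.
  - destruct Ck as [_ [_ [[y [Hy1 Hy2]] _]]].
    exists y. unfold compl; split.
    + intro Hc; apply Hc; auto.
    + intros [y' [Hy' E]]. apply Hy1. rewrite E. apply ch1. apply FHsub; auto.
Qed.

Lemma Gp : forall k k' t, Oset k -> Oset k' -> 1 <= t ->
  cross k (img (Nat.iter t F) k') \/ subset (img (Nat.iter t F) k') k.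
Proof.
  intros k k' t Ok Ok' Ht.
  destruct (classic (subset (img (Nat.iter t F) k') k)) as [S|S]; [right; auto|left].
  pose proof Ok as [Hk [Sk Ck]]. pose proof Ok' as [Hk' [Sk' Ck']].
  destruct (half_ne hh HH) as [u Hu].
  split; [|split; [|split]].
  - exists (Nat.iter t F (F u)). split.
    + apply Sk; apply ch3; auto.
    + exists (F u); split; auto. apply Sk'. exists u; auto.
  - destruct Ck' as [_ [[z [Hz1 Hz2]] _]].
    exists (Nat.iter t F z). split.
    + destruct t; [lia|]. apply Sk. apply ch2; auto.
    + intros [y [Hy E]]. apply inj in E. subst; auto.
  - apply NNPP; intro N. apply S. intros x Hx. apply NNPP; intro Nx. apply N. exists x; auto.
  - apply NC; auto.
Qed.

Lemma Core : forall K, halfspace adj K ->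
  (forall n, 1 <= n -> exists x, K x /\ img (Nat.iter n F) K x) ->
  (forall n, 1 <= n -> exists x, ~ K x /\ ~ img (Nat.iter n F) K x) ->
  (forall n, 1 <= n -> ~ same_set (img (Nat.iter n F) K) K) ->
  skewers F K.
Proof.
  intros K HK H1 H2 H3.
  destruct (classic (exists n, 1 <= n <= D /\ ~ cross K (img (Nat.iter n F) K))) as [[n [Hn Nc]]|N].
  - exists n. split; [lia|].
    destruct (H1 n ltac:(lia)) as [x1 Q1]. destruct (H2 n ltac:(lia)) as [x4 Q4].
    destruct (classic (exists x, K x /\ ~ img (Nat.iter n F) K x)) as [Q2|Q2].
    + destruct (classic (exists x, ~ K x /\ img (Nat.iter n F) K x)) as [Q3|Q3].
      * exfalso; apply Nc. split; [eauto|split; [auto|split; eauto]].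
      * left. split.
        -- intros x Hx. apply NNPP; intro; apply Q3; eauto.
        -- apply NNPP; intro N. apply (H3 n ltac:(lia)). intro x. split.
           ++ intro Hx. apply NNPP; intro; apply Q3; eauto.
           ++ intro Hx. apply NNPP; intro; apply N; eauto.
    + right. split.
      * intros x Hx Kx. rewrite imgn in Hx. apply Hx.
        assert (img (Nat.iter n F) K x) by (apply NNPP; intro; apply Q2; eauto).
        rewrite imgn in H; auto.
      * apply NNPP; intro N. apply (H3 n ltac:(lia)). intro x. split.
        -- intro Hx. apply NNPP; intro Kx. apply N. exists x. split; auto.
           rewrite imgn. unfold compl. rewrite <- imgn. tauto.
        -- intro Hx. apply NNPP; intro; apply Q2; eauto.
  - exfalso. apply (dim_fam (fun i => img (Nat.iter i F) K)).
    + intros. apply (half_img _ _ _ (HFn i)); auto.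
    + intros i j Hij Hj.
      apply (cross_ext (img (Nat.iter i F) K) _ (img (Nat.iter i F) (img (Nat.iter (j - i) F) K))).
      * apply same_refl.
      * intro x. rewrite <- img_comp. replace (i + (j - i)) with j by lia. tauto.
      * apply (cross_img _ _ _ _ (HFn i)). apply NNPP; intro Nc. apply N.
        exists (j - i). split; [lia|auto].
Qed.

Lemma A_core : forall K, Oset K -> skewers F K.
Proof.
  intros K OK. pose proof OK as [HK [SK CK]].
  destruct (half_ne hh HH) as [u Hu].
  apply Core; auto.
  - intros n Hn. exists (Nat.iter n F (F u)). split.
    + apply SK, ch3; auto.
    + exists (F u); split; auto. apply SK; exists u; auto.
  - intros n Hn. apply NC; auto.
  - intros n Hn E. destruct CK as [_ [[z [Hz1 Hz2]] _]].
    assert (Kz : K (Nat.iter n F z)). { destruct n; [lia|]. apply SK, ch2; auto. }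
    apply (proj2 (E _)) in Kz. rewrite imgn, invn1 in Kz. auto.
Qed.

Lemma A'_core : forall K, halfspace adj K -> cross (img F hh) K -> subset K hh -> skewers F K.
Proof.
  intros K HK CK SK. pose proof HFH as [_ [z [Hz1 Hz2]]].
  destruct (half_co hh HH) as [v Hv].
  assert (Fsub: forall n x, img (Nat.iter n F) K x -> hh x).
  { intros n x [y [Hy ->]]. apply ch1, SK; auto. }
  apply Core; auto.
  - intros n Hn. apply NNPP; intro N.
    apply (Hnft K (img (Nat.iter n F) K) (compl hh)). apply FT.
    + auto.
    + apply (half_img _ _ _ (HFn n)); auto.
    + apply compl_half; auto.
    + intros x [A1 B1]; apply N; eauto.
    + intros x [B1 C1]; apply C1; eapply Fsub; eauto.
    + intros x [A1 C1]; apply C1, SK; auto.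
    + exists v; split; [intro; apply Hv, SK; auto| intro; apply Hv; eapply Fsub; eauto].
    + exists z; split.
      * intros [y [Hy E]]. apply Hz2. rewrite E. destruct n; [lia|]. apply ch2, SK; auto.
      * unfold compl; tauto.
    + destruct CK as [_ [[x [Hx1 Hx2]] _]]. exists x. split; auto. unfold compl.
      intro C; apply C, FHsub; auto.
  - intros n Hn. exists v. split; [intro; apply Hv, SK; auto| intro; apply Hv; eapply Fsub; eauto].
  - intros n Hn E. destruct CK as [_ [_ [[x [Hx1 Hx2]] _]]].
    apply (proj2 (E x)) in Hx2. destruct Hx2 as [y [Hy ->]]. apply Hx1.
    destruct n; [lia|]. apply ch2, SK; auto.
Qed.

Lemma orient1 : forall k, halfspace adj k -> cross hh k -> ~ cross (img F hh) k -> Oset k \/ Oset (compl k).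
Proof.
  intros k Hk C NC'.
  destruct (classic (subset (img F hh) k)) as [S|S]; [left; split; [auto|split; auto]|].
  destruct (classic (subset (img F hh) (compl k))) as [S'|S'].
  { right; split; [apply compl_half; auto|split; auto]; apply cross_compl; auto. }
  exfalso; apply NC'.
  split; [|split;[|split]].
  - apply NNPP; intro N; apply S'; intros x Hx Kx; apply N; eauto.
  - apply NNPP; intro N; apply S; intros x Hx; apply NNPP; intro Kx; apply N; eauto.
  - destruct C as [_ [_ [[x [Hx1 Hx2]] _]]]. exists x; split; auto. intro; apply Hx1, FHsub; auto.
  - destruct C as [_ [_ [_ [x [Hx1 Hx2]]]]]. exists x; split; auto. intro; apply Hx1, FHsub; auto.
Qed.

Lemma orient2 : forall k, halfspace adj k -> ~ cross hh k -> cross (img F hh) k ->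
  subset k hh \/ subset (compl k) hh.
Proof.
  intros k Hk NC' C.
  destruct (classic (subset k hh)) as [S|S]; [left; auto|].
  destruct (classic (subset (compl k) hh)) as [S'|S']; [right; auto|].
  exfalso; apply NC'. split; [|split; [|split]].
  - destruct C as [[x [Hx1 Hx2]] _]. exists x; split; auto. apply FHsub; auto.
  - destruct C as [_ [[x [Hx1 Hx2]] _]]. exists x; split; auto. apply FHsub; auto.
  - apply NNPP; intro N; apply S; intros x Hx; apply NNPP; intro; apply N; eauto.
  - apply NNPP; intro N; apply S'; intros x Hx; apply NNPP; intro; apply N; eauto.
Qed.

Lemma partA : forall k, halfspace adj k -> cross hh k -> ~ cross (img F hh) k -> skewers F k.
Proof.
  intros k Hk C N. destruct (orient1 k Hk C N) as [Ok|Ok].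
  - apply A_core; auto.
  - apply (skew_compl F Fi); auto. apply A_core; auto.
Qed.

Lemma partA' : forall k, halfspace adj k -> ~ cross hh k -> cross (img F hh) k -> skewers F k.
Proof.
  intros k Hk N C. destruct (orient2 k Hk N C) as [S|S].
  - apply A'_core; auto.
  - apply (skew_compl F Fi); auto. apply A'_core; auto.
    + apply compl_half; auto.
    + apply cross_compl; auto.
Qed.

Lemma excl : forall k t, Oset k -> exists l, cov l (fun k' => Oset k' /\ subset (img (Nat.iter t F) k') k).
Proof.
  intros k t [Hk [Sk Ck]]. destruct (half_ne hh HH) as [u Hu]. destruct (half_co k Hk) as [q Hq].
  destruct (Sep_cov (d (Nat.iter t Fi q) (F u)) (F u) (Nat.iter t Fi q) eq_refl) as [l Hl].
  exists l. eapply cov_mono; [exact Hl|]. intros k' [[Hk' [Sk' Ck']] S].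
  split; auto. split.
  - apply Sk'. exists u; auto.
  - intro Kq. apply Hq. apply S. exists (Nat.iter t Fi q). split; auto. symmetry; apply invn2.
Qed.

Lemma build : ~ (exists l, cov l Oset) -> forall j, exists b : nat -> (V -> Prop),
  (forall m, m <= j -> Oset (b m)) /\
  (forall m m', m < m' -> m' <= j -> ~ subset (img (Nat.iter (m' - m) F) (b m')) (b m)).
Proof.
  intros NC0 j. induction j as [|j [b [Hb1 Hb2]]].
  - assert (exists k, Oset k) as [k Ok].
    { apply NNPP; intro N; apply NC0; exists nil; intros k Ok; exfalso; apply N; eauto. }
    exists (fun _ => k). split; [intros; auto| intros; lia].
  - destruct (cov_bunion (fun m k' => Oset k' /\ subset (img (Nat.iter (S j - m) F) k') (b m)) j) as [l Hl].
    { intros m Hm. apply excl. apply Hb1; auto. }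
    assert (exists c, Oset c /\ ~ exists m, m <= j /\ subset (img (Nat.iter (S j - m) F) c) (b m))
      as [c [Oc Nc]].
    { apply NNPP; intro N. apply NC0. exists l. intros k Ok. apply Hl.
      apply NNPP; intro N'. apply N. exists k. split; auto. intros [m [Hm S]]. apply N'. exists m; auto. }
    exists (fun i => if Nat.eqb i (S j) then c else b i). split.
    + intros m Hm. destruct (Nat.eqb_spec m (S j)); auto. apply Hb1; lia.
    + intros m m' Hmm Hm'. destruct (Nat.eqb_spec m (S j)); [lia|].
      destruct (Nat.eqb_spec m' (S j)).
      * subst m'. intro S. apply Nc. exists m; split; [lia|auto].
      * apply Hb2; lia.
Qed.

Lemma partB0 : exists l, cov l Oset.
Proof.
  apply NNPP; intro NC0. destruct (build NC0 D) as [b [Hb1 Hb2]].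
  apply (dim_fam (fun m => img (Nat.iter m F) (b m))).
  - intros i Hi. apply (half_img _ _ _ (HFn i)). apply Hb1; auto.
  - intros i j Hij Hj.
    apply (cross_ext (img (Nat.iter i F) (b i)) _ (img (Nat.iter i F) (img (Nat.iter (j - i) F) (b j)))).
    + apply same_refl.
    + intro x. rewrite <- img_comp. replace (i + (j - i)) with j by lia. tauto.
    + apply (cross_img _ _ _ _ (HFn i)).
      destruct (Gp (b i) (b j) (j - i)) as [G|G]; auto; try lia; try (apply Hb1; lia).
      exfalso; apply (Hb2 i j); auto.
Qed.

Lemma partB : exists l, cov l (fun k => halfspace adj k /\ cross hh k /\ ~ cross (img F hh) k).
Proof.
  destruct partB0 as [l Hl]. exists l. intros k [Hk [C N]].
  destruct (orient1 k Hk C N) as [Ok|Ok].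
  - apply Hl; auto.
  - destruct (Hl _ Ok) as [A [HA E]]. exists A; split; auto. apply same_hyp_compl; auto.
Qed.

Lemma partC : exists C, forall x, carrier adj hh x ->
  exists y, carrier adj (img F hh) y /\ dist_le adj x y C.
Proof.
  destruct partB0 as [LO HLO].
  destruct (half_ne hh HH) as [u Hu]. destruct (half_co hh HH) as [v Hv].
  destruct (Sep_cov _ (F u) v eq_refl) as [LB HLB].
  exists (S (length LO + length LB)). intros x [x' [Hxx' Hc]].
  assert (HFh : halfspace adj (img F hh)) by (apply (half_img _ _ _ HF); auto).
  assert (Fu : img F hh (F u)) by (exists u; auto).
  destruct (least (fun n => exists z, img F hh z /\ d x z = n) (d x (F u)) (ex_intro _ (F u) (conj Fu eq_refl)))
    as [n [[z [Fz Hz]] Hmin]].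
  assert (Hnear : forall w, img F hh w -> d x z <= d x w).
  { intros w Fw. rewrite Hz. apply Hmin. exists w; auto. }
  assert (Hb : d x z <= length (W adj x' x :: LO ++ LB)).
  { apply (NP (img F hh) HFh (d x z) x z); auto.
    intros k [Hk [Sk Nk]].
    destruct (classic (cross hh k)) as [Ck|Ck].
    - destruct (HLO k) as [A [HA E]]; [split; auto|]. exists A; split; auto. right; apply in_or_app; auto.
    - destruct (classic (subset k hh)) as [S|S].
      + destruct (HLB k) as [A [HA E]].
        { refine (conj Hk (conj _ _)); [apply Sk; auto| intro; apply Hv, S; auto]. }
        exists A; split; auto. right; apply in_or_app; auto.
      + destruct (classic (k x')) as [Kx'|Kx'].
        * exists (W adj x' x); split; [left; auto|]. left. apply same_sym. apply KL'; auto.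
        * exfalso. apply Ck. split; [|split; [|split]].
          -- exists (F u); split; [apply FHsub|apply Sk]; auto.
          -- destruct Hc as [[A1 A2]|[A1 A2]]; [exists x|exists x']; auto.
          -- apply NNPP; intro N; apply S; intros y Hy; apply NNPP; intro; apply N; eauto.
          -- destruct Hc as [[A1 A2]|[A1 A2]]; [exists x'|exists x]; auto. }
  simpl in Hb; rewrite length_app in Hb.
  destruct (classic (img F hh x)) as [Fx|Fx].
  - exists x. split.
    + exists x'. split; auto. left. split; auto. intro Fx'.
      destruct Hc as [[A1 A2]|[A1 A2]]; [apply A2, FHsub; auto| apply A1, FHsub; auto].
    + exists 0. split; [lia|]. reflexivity.
  - destruct (enter (img F hh) (d x z) x z (d_walk x z) Fx Fz) as [y [Cy [m [Hm Wm]]]].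
    exists y; split; auto. exists m; split; auto. lia.
Qed.

End Act.
Lemma same_hyp_ext : forall A B B', same_hyp A B -> same_set B B' -> same_hyp A B'.
Proof.
  unfold same_hyp, same_set, compl. intros A B B' [E|E] E'; [left|right]; intro x;
  rewrite (E x); rewrite (E' x); tauto.
Qed.

Lemma same_hyp_img : forall F Fi A B, autom F Fi -> same_hyp A B -> same_hyp (img F A) (img F B).
Proof.
  unfold same_hyp, same_set, compl. intros F Fi A B HF [E|E]; [left|right]; intro x;
  rewrite !(img_iff F Fi) by auto; rewrite (E (Fi x)); tauto.
Qed.

Lemma cross_compl_l : forall A B, cross (compl A) B <-> cross A B.
Proof.
  intros A B. split; intro C.
  - apply cross_sym. apply cross_sym in C. exact (proj1 (cross_compl B A) C).
  - apply cross_sym. apply (proj2 (cross_compl B A)). apply cross_sym. auto.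
Qed.

Section Main.
Variables (G : Type) (grp : group_on G) (act : G -> V -> V).
Hypothesis Hact : cubical_action grp adj act.
Variable D : nat.
Hypothesis HD : forall l : list (V -> Prop), (forall A, In A l -> halfspace adj A) ->
    (forall i j dd, i < j < length l -> cross (nth i l dd) (nth j l dd)) -> length l <= D.
Hypothesis Hnft : forall A B C, ~ facing_triple adj A B C.
Variable h : V -> Prop.
Hypothesis Hh : halfspace adj h.
Variable gam : G.
Hypothesis Hgam : strict_subset (img (act gam) h) h.

Lemma grp_rinv : forall g, gmul grp g (ginv grp g) = gone grp.
Proof.
  intro g.
  rewrite <- (gmul1 grp (gmul grp g (ginv grp g))).
  rewrite <- (gmulV grp (ginv grp g)) at 1.
  rewrite <- (gmulA grp (ginv grp (ginv grp g)) (ginv grp g) (gmul grp g (ginv grp g))).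
  rewrite (gmulA grp (ginv grp g) g (ginv grp g)).
  rewrite (gmulV grp g), (gmul1 grp (ginv grp g)), (gmulV grp (ginv grp g)). reflexivity.
Qed.

Lemma Haut : autom (act gam) (act (ginv grp gam)).
Proof.
  destruct Hact as [A1 [A2 A3]]. split; [|split].
  - intro x. rewrite <- A2, grp_rinv, A1; auto.
  - intro x. rewrite <- A2, gmulV, A1; auto.
  - intros; apply A3.
Qed.

Lemma Haut' : autom (act (ginv grp gam)) (act gam).
Proof. apply autom_sym, Haut. Qed.

Lemma Hgam' : strict_subset (img (act (ginv grp gam)) (compl h)) (compl h).
Proof.
  pose proof Haut as [B1 [B2 B3]].
  split.
  - intros x Hx. rewrite (img_iff _ _ _ _ Haut') in Hx. intro hx. apply Hx.
    apply Hgam. exists x; auto.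
  - destruct Hgam as [_ [z [Hz1 Hz2]]]. exists (act (ginv grp gam) z). split.
    + intro hz. apply Hz2. exists (act (ginv grp gam) z). split; auto.
    + rewrite (img_iff _ _ _ _ Haut'). unfold compl. rewrite B1. tauto.
Qed.

Lemma main_all :
  (forall k, in_symdiff adj h (img (act gam) h) k -> skewers (act gam) k) /\
  finitely_many_hyp (in_symdiff adj h (img (act gam) h)) /\
  finite_hausdorff_carriers adj h (img (act gam) h).
Proof.
  pose proof Haut as [B1 [B2 B3]].
  assert (Hch : halfspace adj (compl h)) by (apply compl_half; auto).
  split; [|split].
  - intros k [Hk [[C N]|[N C]]]; unfold H_of in *.
    + apply (partA _ _ Haut h Hh Hgam D HD Hnft); auto.
    + apply (partA' _ _ Haut h Hh Hgam D HD Hnft); auto.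
  - destruct (partB _ _ Haut h Hh Hgam D HD Hnft) as [l1 H1].
    destruct (partB _ _ Haut' (compl h) Hch Hgam' D HD Hnft) as [l2 H2].
    exists (l1 ++ map (img (act gam)) l2). intros k [Hk [[C N]|[N C]]]; unfold H_of in *.
    + destruct (H1 k) as [A [HA E]]; [auto|]. exists A; split; auto. apply in_or_app; auto.
    + destruct (H2 (img (act (ginv grp gam)) k)) as [A [HA E]].
      * split; [apply (half_img _ _ _ Haut'); auto|split].
        -- apply cross_compl_l. apply (cross_img _ _ _ _ Haut).
           apply (cross_ext (img (act gam) h) _ k); auto.
           ++ apply same_refl.
           ++ intro x. rewrite !(img_iff _ _ _ _ Haut), (img_iff _ _ _ _ Haut'), B1. tauto.
        -- rewrite (cross_img _ _ _ _ Haut'). rewrite cross_compl_l. auto.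
      * exists (img (act gam) A). split.
        -- apply in_or_app; right. apply in_map; auto.
        -- apply (same_hyp_ext _ (img (act gam) (img (act (ginv grp gam)) k))).
           ++ apply (same_hyp_img _ _ _ _ Haut); auto.
           ++ intro x. rewrite !(img_iff _ _ _ _ Haut), (img_iff _ _ _ _ Haut'), B1. tauto.
  - destruct (partC _ _ Haut h Hh Hgam D HD Hnft) as [C1 HC1].
    destruct (partC _ _ Haut' (compl h) Hch Hgam' D HD Hnft) as [C2 HC2].
    exists (C1 + C2). split.
    + intros x Hx. destruct (HC1 x Hx) as [y [Hy [m [Hm Wm]]]].
      exists y; split; auto. exists m; split; [lia|auto].
    + intros y Hy. rewrite (carrier_img _ _ _ _ Haut) in Hy.
      rewrite <- carrier_compl in Hy.
      destruct (HC2 _ Hy) as [z [Hz [m [Hm Wm]]]].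
      exists (act gam z). split.
      * rewrite (carrier_img _ _ _ _ Haut') in Hz. rewrite carrier_compl in Hz. auto.
      * exists m. split; [lia|]. rewrite <- (B1 y). apply (walk_F _ _ _ _ _ Haut); auto.
Qed.

End Main.

End Med.

Theorem mainTheorem14 (G V : Type) (grp : group_on G) (adj : V -> V -> Prop)
  (act : G -> V -> V)
  (HY : median_graph adj)
  (Hdim : finite_dimensional adj)
  (Hnft : no_facing_triples adj)
  (Hact : cubical_action grp adj act)
  (Hess : essential adj act)
  (h : V -> Prop) (Hh : halfspace adj h) (gam : G)
  (Hgam : strict_subset (img (act gam) h) h) :
  (forall k, in_symdiff adj h (img (act gam) h) k -> skewers (act gam) k) /\
  finitely_many_hyp (in_symdiff adj h (img (act gam) h)) /\
  finite_hausdorff_carriers adj h (img (act gam) h).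
Proof.
  destruct HY as [Hs [Hi [Hc Hm]]]. destruct Hdim as [D HD].
  exact (main_all V adj Hs Hi Hc Hm G grp act Hact D HD Hnft h Hh gam Hgam).
Qed.
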